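(* If an $n$-qubit code satisfies the Knill–Laflamme conditions for all spherical Pauli errors $\mathrm{Sph}(E)$ with $\mathrm{wt}(E)<d$, then it also satisfies the Knill–Laflamme conditions for all symmetrized Pauli errors $\mathrm{Sym}(E)$ with $\mathrm{wt}(E)<d$.
   Context: For an $n$-qubit operator $A$, $\mathrm{Sym}(A)=\tfrac{1}{n!}\sum_{\sigma\in S_n}P_\sigma^\dagger AP_\sigma$ where $P_\sigma$ permutes the tensor factors. A Pauli $E$ of weight $w$ (number of non-identity factors) is uniquely $E=E_1\cdots E_w$ with each $E_i$ of weight one, and $\mathrm{Sph}(E)=\mathrm{Sym}(E_1)\cdots\mathrm{Sym}(E_w)$. A code satisfies the Knill–Laflamme conditions for an operator $A$ if $\langle\phi|A|\psi\rangle=c_A\langle\phi|\psi\rangle$ for all codewords, with $c_A$ independent of the codewords. *)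

(* Defs.v *)
From mathcomp Require Import all_boot all_order all_algebra all_fingroup all_field.
Set Implicit Arguments. Unset Strict Implicit. Unset Printing Implicit Defensive.
Import GRing.Theory Num.Theory.
Local Open Scope ring_scope.

(* Computational basis states of n qubits: bit strings. *)
Definition bits (n : nat) : finType := {ffun 'I_n -> bool}.
(* State vectors and operators (given by their matrix entries <x|A|y>). *)
Definition vec (n : nat) := bits n -> algC.
Definition op (n : nat) := bits n -> bits n -> algC.

Definition opmul n (A B : op n) : op n := fun x y => \sum_(z : bits n) A x z * B z y.
Definition opid n : op n := fun x y => (x == y)%:R.
Definition adjoint n (A : op n) : op n := fun x y => (A y x)^*.
Definition apply n (A : op n) (v : vec n) : vec n := fun x => \sum_(y : bits n) A x y * v y.
Definition inner n (u v : vec n) : algC := \sum_(x : bits n) (u x)^* * v x.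

(* Single-qubit Paulis: 0 = I, 1 = X, 2 = Y, 3 = Z; basis bits false = |0>, true = |1>. *)
Definition pauli1 (p : 'I_4) (a b : bool) : algC :=
  match val p with
  | 0%N => (a == b)%:R
  | 1%N => (a != b)%:R
  | 2%N => if a == b then 0 else if a then 'i else - 'i
  | _ => if a == b then (if a then -1 else 1) else 0
  end.

Definition pstring (n : nat) := {ffun 'I_n -> 'I_4}.
Definition pauli n (E : pstring n) : op n :=
  fun x y => \prod_(i < n) pauli1 (E i) (x i) (y i).
Definition wt n (E : pstring n) : nat := #|[set i | E i != 0%R]|.

(* The permutation operator P_sigma permuting tensor factors:
   P_sigma |x_1 ... x_n> = |x_{sigma^-1(1)} ... x_{sigma^-1(n)}>. *)
Definition permop n (s : 'S_n) : op n :=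
  fun x y => (x == [ffun i => y ((s^-1)%g i)])%:R.

Definition Symm n (A : op n) : op n :=
  fun x y => (n`!%:R)^-1 *
    \sum_(s : 'S_n) opmul (adjoint (permop s)) (opmul A (permop s)) x y.

Definition single n (i : 'I_n) (p : 'I_4) : pstring n :=
  [ffun j => if j == i then p else 0%R].

(* Sph(E) = Symm(E_1) ... Symm(E_w), factors ordered by increasing qubit index. *)
Definition Sph n (E : pstring n) : op n :=
  foldr (fun i acc => opmul (Symm (pauli (single i (E i)))) acc) (@opid n)
        [seq i <- enum 'I_n | E i != 0%R].

Definition KL n (C : vec n -> Prop) (A : op n) : Prop :=
  exists c : algC, forall phi psi : vec n, C phi -> C psi ->
    inner phi (apply A psi) = c * inner phi psi.

Definition subspace n (C : vec n -> Prop) : Prop :=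
  [/\ C (fun _ => 0),
      (forall u v, C u -> C v -> C (fun x => u x + v x)) &
      (forall (a : algC) u, C u -> C (fun x => a * u x))].

(* Main.v *)
Require Import Defs.
From mathcomp Require Import all_boot all_order all_algebra all_fingroup all_field.
Set Implicit Arguments. Unset Strict Implicit. Unset Printing Implicit Defensive.
Import GRing.Theory Num.Theory.
Local Open Scope ring_scope.

Definition m4n (a b : nat) : nat :=
  if a == 0%N then b else if b == 0%N then a else if a == b then 0%N else (6 - a - b)%N.
Definition m4 (a b : 'I_4) : 'I_4 := inord (m4n a b).
Definition ph (a b : 'I_4) : algC :=
  match val a, val b with
  | 1%N, 2%N => 'i | 1%N, 3%N => - 'i
  | 2%N, 1%N => - 'i | 2%N, 3%N => 'i
  | 3%N, 1%N => 'i | 3%N, 2%N => - 'i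
  | _, _ => 1 end.

Lemma m4n_lt a b : (a < 4)%N -> (b < 4)%N -> (m4n a b < 4)%N.
Proof. by rewrite /m4n; case: a => [|[|[|[|]]]] //; case: b => [|[|[|[|]]]]. Qed.

Lemma val_m4 (a b : 'I_4) : val (m4 a b) = m4n a b.
Proof. by rewrite /m4 /= inordK // m4n_lt. Qed.

Lemma ii : 'i * 'i = -1 :> algC.
Proof. by rewrite -expr2 sqrCi. Qed.

Lemma prod1 (a b : 'I_4) (x y : bool) :
  \sum_(c : bool) pauli1 a x c * pauli1 b c y = ph a b * pauli1 (m4 a b) x y.
Proof.
rewrite big_bool /pauli1 /ph val_m4.
case: a => [[|[|[|[|a]]]] Ha] //=; case: b => [[|[|[|[|b]]]] Hb] //=;
case: x; case: y => /=;
rewrite ?mul0r ?mulr0 ?mul1r ?mulr1 ?add0r ?addr0 ?mulrN ?mulNr ?opprK ?ii //;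
rewrite ?mulr1 ?mul1r ?opprK //.
Qed.


Lemma opmul_pauli n (G H : pstring n) x y :
  opmul (pauli G) (pauli H) x y =
  (\prod_k ph (G k) (H k)) * pauli [ffun k => m4 (G k) (H k)] x y.
Proof.
rewrite /opmul /pauli.
rewrite (eq_bigr (fun z : bits n => \prod_i (pauli1 (G i) (x i) (z i) * pauli1 (H i) (z i) (y i)))); last by move=> z _; rewrite big_split.
rewrite -(bigA_distr_bigA (fun k c => pauli1 (G k) (x k) c * pauli1 (H k) c (y k))).
under eq_bigr do rewrite prod1.
by rewrite big_split /=; congr (_ * _); apply: eq_bigr => k _; rewrite ffunE.
Qed.

Definition act n (s : 'S_n) (x : bits n) : bits n := [ffun i => x ((s^-1)%g i)].
Definition permE n (s : 'S_n) (E : pstring n) : pstring n := [ffun j => E (s j)].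

Lemma opmul_adj_perm n (s : 'S_n) (B : op n) x y :
  opmul (adjoint (permop s)) B x y = B (act s x) y.
Proof.
rewrite /opmul /adjoint /permop (bigD1 (act s x)) //= eqxx conjC_nat mul1r.
rewrite big1 ?addr0 // => z /negPf Hz.
by move: Hz; rewrite /act => ->; rewrite conjC_nat mul0r.
Qed.

Lemma opmul_perm n (s : 'S_n) (A : op n) x y :
  opmul A (permop s) x y = A x (act s y).
Proof.
rewrite /opmul /permop (bigD1 (act s y)) //= eqxx mulr1.
by rewrite big1 ?addr0 // => z /negPf Hz; move: Hz; rewrite /act => ->; rewrite mulr0.
Qed.

Lemma SymmE n (A : op n) x y :
  Symm A x y = (n`!%:R)^-1 * \sum_(s : 'S_n) A (act s x) (act s y).
Proof.
rewrite /Symm; congr (_ * _); apply: eq_bigr => s _.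
by rewrite opmul_adj_perm opmul_perm.
Qed.

Lemma pauli_act n (E : pstring n) s x y :
  pauli E (act s x) (act s y) = pauli (permE s E) x y.
Proof.
rewrite /pauli (reindex_inj (@perm_inj _ s)) /=.
by apply: eq_bigr => j _; rewrite /act /permE !ffunE permK.
Qed.

Lemma act_act n (s t : 'S_n) x : act t (act s x) = act (s * t)%g x.
Proof. by apply/ffunP => i; rewrite /act !ffunE invMg permM. Qed.

Lemma permE_permE n (s t : 'S_n) E : permE t (permE s E) = permE (t * s)%g E.
Proof. by apply/ffunP => i; rewrite /permE !ffunE permM. Qed.

Lemma Symm_inv n (A : op n) s x y : Symm A (act s x) (act s y) = Symm A x y.
Proof.
rewrite !SymmE; congr (_ * _).
rewrite [RHS](reindex_inj (mulgI s)) /=.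
by apply: eq_bigr => t _; rewrite !act_act.
Qed.

Lemma Symm_pauli_perm n (E : pstring n) s x y :
  Symm (pauli (permE s E)) x y = Symm (pauli E) x y.
Proof.
rewrite !SymmE; congr (_ * _).
under eq_bigr do rewrite pauli_act permE_permE.
rewrite [RHS](reindex_inj (mulIg s)) /=.
by apply: eq_bigr => t _; rewrite pauli_act.
Qed.

Lemma act_inj n (s : 'S_n) : injective (act s).
Proof.
move=> x y H; apply/ffunP => i.
have := congr1 (fun f : bits n => f (s i)) H; rewrite /act !ffunE.
by rewrite -permM mulgV perm1.
Qed.

Lemma Symm_mul n (A B : op n) x y :
  opmul (Symm A) (Symm B) x y = Symm (opmul A (Symm B)) x y.
Proof.
rewrite [RHS]SymmE /opmul.
under eq_bigr => z _ do rewrite [Symm A _ _]SymmE -mulrA mulr_suml.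
rewrite -mulr_sumr; congr (_ * _).
rewrite exchange_big /=; apply: eq_bigr => s _.
under eq_bigr => z _ do rewrite -(Symm_inv B s).
by rewrite [RHS](reindex_inj (@act_inj n s)).
Qed.


Definition upd n (H : pstring n) i (q : 'I_4) : pstring n :=
  [ffun k => if k == i then q else H k].

Lemma m40 b : m4 0 b = b.
Proof. by apply: val_inj; rewrite val_m4. Qed.

Lemma ph0 b : ph 0 b = 1.
Proof. by []. Qed.

Lemma opmul_single n i p (H : pstring n) x y :
  opmul (pauli (single i p)) (pauli H) x y =
  ph p (H i) * pauli (upd H i (m4 p (H i))) x y.
Proof.
rewrite opmul_pauli (bigD1 i) //= big1 ?mulr1; last first.
  by move=> k /negPf Hk; rewrite /single ffunE Hk ph0.
rewrite /single ffunE eqxx; congr (_ * pauli _ x y).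
apply/ffunP => k; rewrite !ffunE; case: (k =P i) => [->|/eqP] //.
by move=> _; rewrite m40.
Qed.

Lemma opmul_single_Symm n i p (F : pstring n) z w :
  opmul (pauli (single i p)) (Symm (pauli F)) z w =
  (n`!%:R)^-1 * \sum_(s : 'S_n)
     ph p (F (s i)) * pauli (upd (permE s F) i (m4 p (F (s i)))) z w.
Proof.
rewrite /opmul.
under eq_bigr => u _ do rewrite SymmE mulrCA mulr_sumr.
rewrite -mulr_sumr; congr (_ * _); rewrite exchange_big /=.
apply: eq_bigr => s _.
under eq_bigr => u _ do rewrite pauli_act.
have PE : permE s F i = F (s i) by rewrite ffunE.
by rewrite -PE -opmul_single.
Qed.

Lemma L1 n i p (F : pstring n) x y :
  opmul (Symm (pauli (single i p))) (Symm (pauli F)) x y =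
  (n`!%:R)^-1 * \sum_(s : 'S_n)
     ph p (F (s i)) * Symm (pauli (upd (permE s F) i (m4 p (F (s i))))) x y.
Proof.
rewrite Symm_mul SymmE.
under eq_bigr => t _ do rewrite opmul_single_Symm.
under [in RHS]eq_bigr => s _ do rewrite SymmE mulrCA mulr_sumr.
rewrite -mulr_sumr -[in RHS]mulr_sumr; congr (_ * (_ * _)).
by rewrite exchange_big.
Qed.


Definition closedP n (P : op n -> Prop) :=
  [/\ P (fun _ _ => 0),
      (forall A B, P A -> P B -> P (fun x y => A x y + B x y)),
      (forall c A, P A -> P (fun x y => c * A x y)) &
      (forall A B, A =2 B -> P A -> P B)].

Definition Spn n k (A : op n) := forall P, closedP P ->
  (forall F : pstring n, (wt F < k)%N -> P (Symm (pauli F))) -> P A.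

Lemma Spn_closed n k : closedP (@Spn n k).
Proof.
split.
- by move=> P [].
- by move=> A B HA HB P cP HP; case: (cP) => _ Hadd _ _; apply: Hadd; [apply: HA|apply: HB].
- by move=> c A HA P cP HP; case: (cP) => _ _ Hs _; apply: Hs; apply: HA.
- by move=> A B AB HA P cP HP; case: (cP) => _ _ _ He; apply: He AB _; apply: HA.
Qed.

Lemma Spn_mono n k k' (A : op n) : (k <= k')%N -> Spn k A -> Spn k' A.
Proof.
by move=> kk HA P cP HP; apply: HA => // F HF; apply: HP; apply: leq_trans kk.
Qed.

Lemma Spn_sym n k (F : pstring n) : (wt F < k)%N -> Spn k (Symm (pauli F)).
Proof. by move=> HF P cP HP; apply: HP. Qed.

Lemma closedP_sum n (P : op n -> Prop) (I : finType) (Q : pred I) (g : I -> op n) :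
  closedP P -> (forall j, Q j -> P (g j)) ->
  P (fun x y => \sum_(j | Q j) g j x y).
Proof.
case=> H0 Hadd Hs He Hg.
have : forall r, P (fun x y => \sum_(j <- r | Q j) g j x y).
  elim=> [|j r IH].
    by apply: He H0 => x y; rewrite big_nil.
  case Qj: (Q j).
    by apply: He (Hadd _ _ (Hg j Qj) IH) => x y; rewrite big_cons Qj.
  by apply: He IH => x y; rewrite big_cons Qj.
by apply.
Qed.

Lemma closedP_eq n (P : op n -> Prop) (A B : op n) : closedP P -> A =2 B -> P A -> P B.
Proof. by case=> _ _ _ He; apply: He. Qed.

Lemma closedP_scale n (P : op n -> Prop) c (A : op n) : closedP P -> P A -> P (fun x y => c * A x y).
Proof. by case=> _ _ Hs _; apply: Hs. Qed.

Lemma closedP_add n (P : op n -> Prop) (A B : op n) : closedP P -> P A -> P B -> P (fun x y => A x y + B x y).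
Proof. by case=> _ Ha _ _; apply: Ha. Qed.

Lemma wt_permE n (s : 'S_n) (F : pstring n) : wt (permE s F) = wt F.
Proof.
rewrite /wt.
have -> : [set k | permE s F k != 0%R] = (s^-1)%g @: [set k | F k != 0%R].
  apply/setP => k; rewrite inE.
  apply/idP/imsetP.
    by rewrite ffunE => H; exists (s k); rewrite ?inE -?permM ?mulgV ?perm1.
  by move=> [j]; rewrite inE => Hj ->; rewrite ffunE -permM mulVg perm1.
by rewrite card_imset //; apply: perm_inj.
Qed.

Lemma wt_upd_le n (H : pstring n) i q : (wt (upd H i q) <= (wt H).+1)%N.
Proof.
rewrite /wt.
apply: (@leq_trans #|i |: [set k | H k != 0%R]|).
  apply: subset_leq_card; apply/subsetP => k; rewrite !inE ffunE.
  by case: (k =P i) => [->|_]; rewrite ?eqxx //= orbF.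
by rewrite cardsU1; case: (_ \notin _).
Qed.

Lemma wt_upd_nz n (H : pstring n) i q : H i != 0%R -> (wt (upd H i q) <= wt H)%N.
Proof.
move=> Hi; rewrite /wt.
apply: subset_leq_card; apply/subsetP => k; rewrite !inE ffunE.
by case: (k =P i) => [->|_].
Qed.


Lemma L3 n i p (F : pstring n) :
  Spn (wt F).+2 (opmul (Symm (pauli (single i p))) (Symm (pauli F))).
Proof.
apply: (closedP_eq (Spn_closed _ _) (fun x y => esym (L1 i p F x y))).
apply: (closedP_scale _ (Spn_closed _ _)).
refine (@closedP_sum _ _ _ (fun _ => true) (fun (s : 'S_n) x y => ph p (F (s i)) * Symm (pauli (upd (permE s F) i (m4 p (F (s i))))) x y) (Spn_closed _ _) _).
move=> s _; apply: (closedP_scale _ (Spn_closed _ _)).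
apply: Spn_sym; rewrite ltnS -(wt_permE s F); exact: wt_upd_le.
Qed.

Lemma fact_neq0 n : (n`!%:R : algC) != 0.
Proof. by rewrite pnatr_eq0 -lt0n fact_gt0. Qed.

Lemma m4_0 p : m4 p 0 = p.
Proof.
apply: val_inj; rewrite val_m4 /m4n /=.
by case: p => [[|[|[|[|]]]] ?].
Qed.

Lemma ph_0 p : ph p 0 = 1.
Proof. by case: p => [[|[|[|[|]]]] ?]. Qed.

Lemma upd_permE n (s : 'S_n) (F : pstring n) i p :
  F i = 0%R -> F (s i) = 0%R ->
  upd (permE s F) i p = permE (s * tperm i (s i))%g (upd F i p).
Proof.
move=> Fi Fsi; apply/ffunP => k; rewrite /upd /permE !ffunE permM.
case: (k =P i) => [->|/eqP ki]; first by rewrite tpermR eqxx.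
case: tpermP => [Ha|Hb|Hc Hd].
- have si : s i != i.
    by apply: contra ki => /eqP si; apply/eqP; apply: (@perm_inj _ s); rewrite Ha si.
  by rewrite (negPf si) Fsi Ha Fi.
- by move/perm_inj: Hb => /eqP; rewrite (negPf ki).
- by case: (s k =P i).
Qed.

Lemma L2 n i p (F : pstring n) : F i = 0%R ->
  exists2 c : algC, c != 0 & exists R : op n, Spn (wt F).+1 R /\
   forall x y, opmul (Symm (pauli (single i p))) (Symm (pauli F)) x y =
               c * Symm (pauli (upd F i p)) x y + R x y.
Proof.
move=> Fi.
exists ((n`!%:R)^-1 * #|[pred s : 'S_n | F (s i) == 0%R]|%:R).
  rewrite mulf_neq0 // ?invr_eq0 ?fact_neq0 // pnatr_eq0 -lt0n.
  by apply/card_gt0P; exists 1%g; rewrite inE perm1 Fi.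
exists (fun x y => (n`!%:R)^-1 * \sum_(s : 'S_n | F (s i) != 0%R)
     ph p (F (s i)) * Symm (pauli (upd (permE s F) i (m4 p (F (s i))))) x y).
split.
  apply: (closedP_scale _ (Spn_closed _ _)).
  apply: (@closedP_sum _ _ 'S_n _ _ (Spn_closed _ _)).
  move=> s Hs; apply: (closedP_scale _ (Spn_closed _ _)).
  apply: Spn_sym; rewrite ltnS -(wt_permE s F); apply: wt_upd_nz.
  by rewrite ffunE.
move=> x y; rewrite L1 (bigID (fun s : 'S_n => F (s i) == 0%R)) /= mulrDr.
congr (_ + _); rewrite -mulrA; congr (_ * _).
rewrite (eq_bigr (fun _ => Symm (pauli (upd F i p)) x y)).
  by rewrite sumr_const mulr_natl.
move=> s /eqP Fsi; rewrite Fsi ph_0 m4_0 mul1r upd_permE //.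
exact: Symm_pauli_perm.
Qed.


Definition Sphl n (E : pstring n) (l : seq 'I_n) : op n :=
  foldr (fun i acc => opmul (Symm (pauli (single i (E i)))) acc) (@opid n) l.
Definition restr n (E : pstring n) (l : seq 'I_n) : pstring n :=
  [ffun j => if j \in l then E j else 0%R].

Lemma pauli0 n x y : pauli (n:=n) [ffun => 0%R] x y = opid x y.
Proof.
rewrite /pauli /opid; case: (x =P y) => [->|ne].
  by rewrite big1 // => k _; rewrite ffunE /pauli1 /= eqxx.
have [k Hk] : exists k, x k != y k.
  apply/existsP; apply: contraT; rewrite negb_exists => /forallP H.
  by case: ne; apply/ffunP => k; apply/eqP; move: (H k); rewrite negbK.
by rewrite (bigD1 k) //= ffunE /pauli1 /= (negPf Hk) mul0r.
Qed.

Lemma Symm_opid n x y : Symm (@opid n) x y = opid x y.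
Proof.
rewrite SymmE /opid.
under eq_bigr => s _ do rewrite (inj_eq (@act_inj n s)).
by rewrite sumr_const card_Sn -[(x == y)%:R *+ _]mulr_natl mulrA mulVf ?mul1r // fact_neq0.
Qed.

Lemma Symm_ext n (A B : op n) : A =2 B -> forall x y, Symm A x y = Symm B x y.
Proof. by move=> AB x y; rewrite !SymmE; under eq_bigr do rewrite AB. Qed.

Lemma wt_restr n (E : pstring n) l : uniq l -> {in l, forall i, E i != 0%R} ->
  wt (restr E l) = size l.
Proof.
move=> Ul Hl; rewrite /wt -(card_uniqP Ul); apply: eq_card => k.
rewrite inE ffunE; case: ifP => kl; first by rewrite Hl.
by rewrite eqxx.
Qed.

Lemma Q n (E : pstring n) l : uniq l -> {in l, forall i, E i != 0%R} ->
  exists2 c : algC, c != 0 & exists R : op n, Spn (size l) R /\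
   forall x y, Sphl E l x y = c * Symm (pauli (restr E l)) x y + R x y.
Proof.
elim: l => [|i l IH] /=.
  move=> _ _; exists 1; first exact: oner_neq0.
  exists (fun (_ _ : bits n) => (0 : algC)).
  split.
    by case: (Spn_closed n 0).
  move=> x y; rewrite addr0 mul1r.
  have -> : restr E [::] = [ffun => 0%R] by apply/ffunP => k; rewrite !ffunE.
  by rewrite (Symm_ext (@pauli0 n)) Symm_opid.
move=> /andP [il Ul] Hl.
have Hl' : {in l, forall j, E j != 0%R} by move=> j jl; apply: Hl; rewrite inE jl orbT.
have [c' c'0 [R' [SR' eqR']]] := IH Ul Hl'.
have Fi : restr E l i = 0%R by rewrite ffunE (negPf il).
have [c'' c''0 [R'' [SR'' eqR'']]] := L2 (E i) Fi.
set S := Symm (pauli (single i (E i))).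
exists (c' * c''); first by rewrite mulf_neq0.
exists (fun x y => c' * R'' x y + opmul S R' x y); split.
  apply: (closedP_add (Spn_closed _ _)).
    apply: (closedP_scale _ (Spn_closed _ _)).
    by rewrite -(wt_restr Ul Hl').
  apply: (SR' (fun A => Spn (size l).+1 (opmul S A))).
    split.
    - apply: (closedP_eq (Spn_closed _ _) _ (let: And4 h _ _ _ := Spn_closed n (size l).+1 in h)) => x y.
      by rewrite /opmul big1 // => z _; rewrite mulr0.
    - move=> A B HA HB; apply: (closedP_eq (Spn_closed _ _) _ (closedP_add (Spn_closed _ _) HA HB)).
      by move=> x y; rewrite /opmul -big_split /=; apply: eq_bigr => z _; rewrite mulrDr.
    - move=> a A HA; apply: (closedP_eq (Spn_closed _ _) _ (closedP_scale a (Spn_closed _ _) HA)).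
      by move=> x y; rewrite /opmul mulr_sumr; apply: eq_bigr => z _; rewrite mulrCA.
    - move=> A B AB HA; apply: (closedP_eq (Spn_closed _ _) _ HA).
      by move=> x y; rewrite /opmul; apply: eq_bigr => z _; rewrite AB.
  move=> F HF /=; have H3 := @L3 n i (E i) F.
  by apply: (Spn_mono _ H3); rewrite ltnS.
move=> x y.
have -> : restr E (i :: l) = upd (restr E l) i (E i).
  apply/ffunP => k; rewrite !ffunE inE.
  by case: (k =P i) => [->|_] //=.
rewrite /= -/S /opmul.
under eq_bigr => z _ do rewrite eqR' mulrDr mulrCA.
rewrite big_split /= -mulr_sumr -/(opmul S _ x y) eqR'' mulrDr mulrA addrA.
done.
Qed.


Lemma innerA n (phi psi : vec n) (A : op n) :
  inner phi (apply A psi) = \sum_x \sum_y (phi x)^* * (A x y * psi y).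
Proof. by rewrite /inner; apply: eq_bigr => x _; rewrite mulr_sumr. Qed.

Lemma KL_closed n (C : vec n -> Prop) : closedP (KL C).
Proof.
split.
- exists 0 => phi psi _ _; rewrite innerA mul0r big1 // => x _.
  by rewrite big1 // => y _; rewrite mul0r mulr0.
- move=> A B [a Ha] [b Hb]; exists (a + b) => phi psi Cphi Cpsi.
  rewrite mulrDl -Ha // -Hb // !innerA -big_split /=; apply: eq_bigr => x _.
  by rewrite -big_split /=; apply: eq_bigr => y _; rewrite -mulrDr mulrDl.
- move=> c A [a Ha]; exists (c * a) => phi psi Cphi Cpsi.
  rewrite -mulrA -Ha // !innerA mulr_sumr; apply: eq_bigr => x _.
  by rewrite mulr_sumr; apply: eq_bigr => y _; rewrite -!mulrA mulrCA.
- move=> A B AB [a Ha]; exists a => phi psi Cphi Cpsi.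
  rewrite -Ha // !innerA; apply: eq_bigr => x _.
  by apply: eq_bigr => y _; rewrite AB.
Qed.

Theorem lemmaS8 (n d : nat) (C : vec n -> Prop) :
  subspace C ->
  (forall E : pstring n, (wt E < d)%N -> KL C (Sph E)) ->
  forall E : pstring n, (wt E < d)%N -> KL C (Symm (pauli E)).
Proof.
move=> _ HSph.
suff H : forall w (E : pstring n), (wt E < w)%N -> (wt E < d)%N -> KL C (Symm (pauli E)).
  by move=> E HE; apply: (H (wt E).+1).
elim=> [//|w IH] E HEw HEd.
set l := [seq i <- enum 'I_n | E i != 0%R].
have Ul : uniq l by rewrite filter_uniq // enum_uniq.
have Hl : {in l, forall i, E i != 0%R} by move=> i; rewrite mem_filter => /andP [].
have [c c0 [R [SR eqR]]] := Q Ul Hl.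
have rE : restr E l = E.
  apply/ffunP => k; rewrite ffunE mem_filter mem_enum andbT.
  by case: eqP => [->|].
have wE : wt E = size l by rewrite -(wt_restr Ul Hl) rE.
have KR : KL C R.
  apply: SR; first exact: KL_closed.
  move=> F HF; apply: IH; first by apply: leq_trans HF _; rewrite -wE.
  by apply: ltn_trans HF _; rewrite -wE.
have KS : KL C (Sph E) := HSph E HEd.
have cK := KL_closed C.
apply: (closedP_eq cK (A := fun x y => c^-1 * (Sph E x y + (-1) * R x y))).
  move=> x y; rewrite (_ : Sph E x y = Sphl E l x y) // eqR rE mulN1r addrK mulrA mulVf // mul1r.
  done.
apply: (closedP_scale (A := fun x y => Sph E x y + (-1) * R x y) _ cK).
apply: (closedP_add (A := Sph E) (B := fun x y => (-1) * R x y) cK KS).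
exact: (closedP_scale (A := R) _ cK).
Qed.
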